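(* Let $\omega\in\mathbb{R}^n$ and let $i\ge 0$ be an index such that $T_{i+1}(\omega)$ is defined. Then $$\frac{1}{T_i(\omega)+T_{i+1}(\omega)}\le\|T_i(\omega)\omega\|_{\mathbb{Z}}\le\frac{1}{T_{i+1}(\omega)^{1/n}}.$$
   Context: For $\omega=(\omega_1,\dots,\omega_n)\in\mathbb{R}^n$, $|\omega|=\max_i|\omega_i|$ and $\|\omega\|_{\mathbb{Z}}=\min_{k\in\mathbb{Z}^n}|\omega-k|$. The periods of $\omega$ are defined by $T_0(\omega)=1$ and $T_{i+1}(\omega)=\min\{T\in\mathbb{N},\,T\ge 1:\|T\omega\|_{\mathbb{Z}}<\|T_i(\omega)\omega\|_{\mathbb{Z}}\}$ (defined whenever this set is nonempty). *)

(* Defs.v *)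
From HB Require Import structures.
From mathcomp Require Import all_boot all_order all_algebra.
From mathcomp Require Import reals exp.
Set Implicit Arguments. Unset Strict Implicit. Unset Printing Implicit Defensive.
Import Order.TTheory GRing.Theory Num.Theory.
Local Open Scope ring_scope.

(* distance of a real number to Z: min over k in Z of |x - k|,
   attained at floor x or floor x + 1 *)
Definition distZ (R : realType) (x : R) : R :=
  Num.min (x - (Num.floor x)%:~R) ((Num.floor x + 1)%:~R - x).

(* ||w||_Z = min_{k in Z^n} max_i |w_i - k_i| = max_i dist(w_i, Z) *)
Definition normZ (R : realType) (n : nat) (w : 'I_n -> R) : R :=
  \big[Num.max/0]_(i < n) distZ (w i).

Definition scalev (R : realType) (n : nat) (T : nat) (w : 'I_n -> R) : 'I_n -> R :=
  fun i => T%:R * w i.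

(* isPeriod w i T  <->  T_i(w) is defined and equals T.
   T_0 = 1, T_{i+1} = min { T >= 1 : ||T w||_Z < ||T_i w||_Z }. *)
Inductive isPeriod (R : realType) (n : nat) (w : 'I_n -> R) : nat -> nat -> Prop :=
| isPeriod0 : isPeriod w 0 1
| isPeriodS i Ti T :
    isPeriod w i Ti ->
    (1 <= T)%N ->
    normZ (scalev T w) < normZ (scalev Ti w) ->
    (forall T', (1 <= T')%N -> normZ (scalev T' w) < normZ (scalev Ti w) -> (T <= T')%N) ->
    isPeriod w i.+1 T.

(* Main.v *)
Require Import Defs.
From HB Require Import structures.
From mathcomp Require Import all_boot all_order all_algebra.
From mathcomp Require Import reals exp.
From mathcomp Require Import ring lra zify.
Import Order.TTheory GRing.Theory Num.Theory.
Set Implicit Arguments. Unset Strict Implicit.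
Local Open Scope ring_scope.

Section S.
Variable R : realType.

Lemma distZ_le (x : R) (c : int) : distZ x <= `|x - c%:~R|.
Proof.
rewrite /distZ; have /andP[h1 h2] := floor_itv x.
have [hc|hc] := leP c (Num.floor x).
  rewrite ge_min; apply/orP; left.
  have : c%:~R <= (Num.floor x)%:~R :> R by rewrite ler_int.
  move=> hh; rewrite ger0_norm; lra.
rewrite ge_min; apply/orP; right.
have : (Num.floor x + 1)%:~R <= c%:~R :> R by rewrite ler_int; lia.
move=> hh; rewrite ler0_norm; lra.
Qed.

Lemma distZ_attain (x : R) : exists p : int, distZ x = `|x - p%:~R|.
Proof.
have /andP[h1 h2] := floor_itv x.
rewrite /distZ /Order.min /=; case: ifP => h.
  exists (Num.floor x); rewrite ger0_norm //; lra.
exists (Num.floor x + 1); rewrite ler0_norm; lra.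
Qed.

Lemma distZ_ge0 (x : R) : 0 <= distZ x.
Proof. by have [p ->] := distZ_attain x. Qed.

Lemma normZ_ge n (w : 'I_n -> R) j : distZ (w j) <= normZ w.
Proof.
rewrite /normZ (bigD1 j) //= le_max lexx //.
Qed.

Lemma normZ_le n (w : 'I_n -> R) c : 0 <= c -> (forall j, distZ (w j) <= c) -> normZ w <= c.
Proof.
move=> c0 h; rewrite /normZ; elim/big_ind: _ => //.
by move=> x y hx hy; rewrite ge_max hx hy.
Qed.

Lemma normZ_lt n (w : 'I_n -> R) c : 0 < c -> (forall j, distZ (w j) < c) -> normZ w < c.
Proof.
move=> c0 h; rewrite /normZ; elim/big_ind: _ => //.
by move=> x y hx hy; rewrite gt_max hx hy.
Qed.

Lemma normZ_ex n (w : 'I_n -> R) c : 0 < c -> c <= normZ w -> exists j, c <= distZ (w j).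
Proof.
move=> c0 h; case: (pickP (fun j => c <= distZ (w j))) => [j hj|H]; first by exists j.
have : normZ w < c by apply: normZ_lt => // j; rewrite ltNge H.
by rewrite ltNge h.
Qed.

Lemma normZ_ge0 n (w : 'I_n -> R) : 0 <= normZ w.
Proof.
rewrite /normZ; elim/big_ind: _ => //.
- by move=> x y hx hy; rewrite le_max hx.
- by move=> j _; exact: distZ_ge0.
Qed.

End S.

Section P.
Variables (K : realType) (n : nat) (w : 'I_n -> K).

Lemma period_uniq i T1 T2 : isPeriod w i T1 -> isPeriod w i T2 -> T1 = T2.
Proof.
move=> h; elim: h T2 => [|i' Ti T hi IH h1 hlt hmin] T2 h2; first by inversion h2.
inversion h2 as [|a b c hb hc hd he]; subst.
have E := IH _ hb; subst.
apply/eqP; rewrite eqn_leq; apply/andP; split; [exact: hmin | exact: he].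
Qed.

Lemma period_ge1 i T : isPeriod w i T -> (1 <= T)%N.
Proof. by case. Qed.

Lemma period_S i T T' : isPeriod w i T -> isPeriod w i.+1 T' ->
  [/\ normZ (scalev T' w) < normZ (scalev T w),
      (forall d, (1 <= d)%N -> (d < T')%N -> normZ (scalev T w) <= normZ (scalev d w))
    & (T <= T')%N].
Proof.
move=> h h'; inversion h' as [|a b c hb hc hd he]; subst.
have E := period_uniq h hb; subst.
split => //.
  move=> d d1 dT; rewrite leNgt; apply/negP => hdd.
  by have := he _ d1 hdd; rewrite leqNgt dT.
move: h hc hd; case => [|i0 T0 T1 h0 g1 glt gmin] hh1 hlt.
  by [].
apply: gmin => //; exact: lt_trans hlt glt.
Qed.
End P.

Section L.
Variables (K : realType) (n : nat) (w : 'I_n -> K).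

Definition near (x : K) : int :=
  if x - (Num.floor x)%:~R < (Num.floor x + 1)%:~R - x then Num.floor x else Num.floor x + 1.

Lemma distZ_near x : distZ x = `|x - (near x)%:~R|.
Proof.
have /andP[h1 h2] := floor_itv x.
rewrite /distZ /near /Order.min /=; case: ifP => h.
  rewrite ger0_norm //; lra.
rewrite ler0_norm; lra.
Qed.

Lemma natz_R (T : nat) : ((T%:Z)%:~R : K) = T%:R.
Proof. by rewrite pmulrn. Qed.

Lemma lower (T T' : nat) : (1 <= T)%N -> (T <= T')%N ->
  normZ (scalev T' w) < normZ (scalev T w) ->
  (T + T')%:R^-1 <= normZ (scalev T w).
Proof.
move=> T1 TT' hlt.
set d := normZ (scalev T w).
have dj : forall j, `|T%:R * w j - (near (T%:R * w j))%:~R| <= d.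
  by move=> j; rewrite -distZ_near; exact: (normZ_ge (scalev T w) j).
have dj' : forall j, `|T'%:R * w j - (near (T'%:R * w j))%:~R| <= d.
  move=> j; rewrite -distZ_near; apply: le_trans (ltW hlt).
  exact: (normZ_ge (scalev T' w) j).
have T0 : (0 : K) < T%:R by rewrite ltr0n.
have TT0 : (0 : K) < (T + T')%:R by rewrite ltr0n addn_gt0 T1.
case: (pickP (fun j => T%:Z * near (T'%:R * w j) != T'%:Z * near (T%:R * w j))) => [j hj|H].
  set p := near (T%:R * w j) in hj dj; set p' := near (T'%:R * w j) in hj dj'.
  have hD : (1 : K) <= `|(T%:Z * p' - T'%:Z * p)%:~R|.
    apply: norm_intr_ge1; first exact: intr_int.
    by rewrite intr_eq0 subr_eq0.
  have E : ((T%:Z * p' - T'%:Z * p)%:~R : K) =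
      T%:R * (p'%:~R - T'%:R * w j) + T'%:R * (T%:R * w j - p%:~R).
    rewrite intrB !intrM !natz_R; ring.
  rewrite E in hD.
  have h1 := dj j; have h2 := dj' j.
  rewrite -[X in X <= _]mulr1 ler_pdivrMl // natrD.
  apply: le_trans hD _; apply: le_trans (ler_normD _ _) _.
  rewrite mulrDl; apply: lerD; rewrite normrM ger0_norm ?ler0n //;
    apply: ler_wpM2l; rewrite ?ler0n //.
  by rewrite distrC.
exfalso; move: hlt; apply/negP; rewrite -leNgt.
apply: normZ_le; first exact: normZ_ge0.
move=> j; apply: le_trans (normZ_ge (scalev T' w) j).
rewrite /scalev !distZ_near.
have /negbFE/eqP hj := H j.
have E : T%:R * (T'%:R * w j - (near (T'%:R * w j))%:~R) =
         T'%:R * (T%:R * w j - (near (T%:R * w j))%:~R) :> K.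
  have := congr1 (fun z : int => (z%:~R : K)) hj; rewrite /= !intrM !natz_R => hh.
  rewrite !mulrBr hh; ring.
have := congr1 (fun z => `|z|) E; rewrite /= !normrM (ger0_norm (ler0n _ T)) (ger0_norm (ler0n _ T')) => E2.
rewrite -(ler_pM2l T0) E2; apply: ler_wpM2r => //; by rewrite ler_nat.
Qed.
End L.

Section C.
Variables (K : realType) (n : nat) (w : 'I_n -> K).

Lemma key_real (A A' z c g g' L M d : K) (a a' : int) :
  0 < M -> (a%:~R <= A < a%:~R + 1) -> (a'%:~R <= A' < a'%:~R + 1) ->
  0 <= g <= L - 1 -> 0 <= g' <= L - 1 -> L <= M * d ->
  M * z = A - A' -> (a%:~R + g) - (a'%:~R + g') = c * M ->
  `|z - c| < d.
Proof.
move=> M0 /andP[h1 h2] /andP[h3 h4] /andP[h5 h6] /andP[h7 h8] hL hz hc.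
have E : M * (z - c) = (A - a%:~R) - (A' - a'%:~R) - g + g'.
  rewrite mulrBr hz; lra.
rewrite -(ltr_pM2l M0) -{1}(ger0_norm (ltW M0)) -normrM E.
rewrite ltr_norml; apply/andP; split; lra.
Qed.

Lemma distZ_diff (k k' : nat) j (c : int) :
  distZ (`|(k%:Z - k'%:Z)|%N%:R * w j) <= `|(k%:R - k'%:R) * w j - c%:~R|.
Proof.
case: (leqP k' k) => h.
  have -> : `|(k%:Z - k'%:Z)|%N = (k - k')%N by lia.
  by rewrite natrB // distZ_le.
have -> : `|(k%:Z - k'%:Z)|%N = (k' - k)%N by lia.
rewrite natrB ?(ltnW h) //.
apply: le_trans (distZ_le _ (- c)) _.
rewrite -[X in _ <= X]normrN mulrNz; rewrite le_eqVlt; apply/orP; left; apply/eqP; congr `|_|; ring.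
Qed.

End C.

Section Cnt.
Variables (K : realType) (n : nat) (w : 'I_n -> K).

Lemma absz_mod_lt (x : int) (m : nat) : (`|(x %% m.+1%:Z)%Z|%N < m.+1)%N.
Proof.
have h1 : (0 <= (x %% m.+1%:Z)%Z) by apply: modz_ge0.
have h2 : ((x %% m.+1%:Z)%Z < m.+1%:Z) by apply: ltz_pmod.
lia.
Qed.

Lemma counting (T' m : nat) (dl : K) : 0 < dl -> dl <= 1 ->
  (forall d, (1 <= d)%N -> (d < T')%N -> exists j, dl <= distZ (d%:R * w j)) ->
  (T' * (Num.truncn (m.+1%:R * dl)) ^ n <= m.+1 ^ n)%N.
Proof.
move=> d0 d1 hP.
set M := m.+1; set L := Num.truncn (M%:R * dl).
have M0 : (0 : K) < M%:R by rewrite ltr0n.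
have Md0 : 0 <= M%:R * dl by rewrite mulr_ge0 // ltW.
have LM : (L%:R <= M%:R * dl) by rewrite truncn_le.
have LleM : (L <= M)%N.
  rewrite -(ler_nat K); apply: le_trans LM _; rewrite ler_piMr // ltW.
pose a (k : nat) j : int := Num.floor (M%:R * (k%:R * w j)).
pose f (p : 'I_T' * {ffun 'I_n -> 'I_L}) : {ffun 'I_n -> 'I_M} :=
  [ffun j => inord `|((a p.1 j + (p.2 j)%:Z) %% M%:Z)%Z|%N].
have inj : injective f.
  move=> [k g] [k' g'] /= /ffunP hE.
  have hj : forall j, ((a k j + (g j)%:Z) %% M%:Z)%Z = ((a k' j + (g' j)%:Z) %% M%:Z)%Z.
    move=> j; have := hE j; rewrite !ffunE => /(congr1 val).
    rewrite /= !inordK ?absz_mod_lt //.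
    have h1 : (0 <= ((a k j + (g j)%:Z) %% M%:Z)%Z) by apply: modz_ge0.
    have h2 : (0 <= ((a k' j + (g' j)%:Z) %% M%:Z)%Z) by apply: modz_ge0.
    lia.
  case: (eqVneq (k : nat) k') => [kk|kk].
    have kE : k = k' by apply: val_inj.
    subst k'; congr (_, _); apply/ffunP => j; apply: val_inj.
    have := hj j => /eqP; rewrite eqz_modDl.
    have gL := ltn_ord (g j); have gL' := ltn_ord (g' j).
    rewrite !modz_small; first by move=> /eqP [].
      by rewrite lez_nat ltz_nat (leq_trans gL' LleM).
    by rewrite lez_nat ltz_nat (leq_trans gL LleM).
  exfalso.
  have [d1' dT] : (1 <= `|(k%:Z - k'%:Z)|%N)%N /\ (`|(k%:Z - k'%:Z)|%N < T')%N.
    have := ltn_ord k; have := ltn_ord k'; move: kk => /eqP kk; lia.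
  have [j hj'] := hP _ d1' dT.
  set x := (a k j + (g j)%:Z)%Z; set y := (a k' j + (g' j)%:Z)%Z.
  have hc : x - y = ((x %/ M%:Z)%Z - (y %/ M%:Z)%Z) * M%:Z.
    rewrite {1}(divz_eq x M%:Z) {1}(divz_eq y M%:Z) (hj j); ring.
  set c := ((x %/ M%:Z)%Z - (y %/ M%:Z)%Z) in hc.
  have := distZ_diff w k k' j c.
  have key : `|(k%:R - k'%:R) * w j - c%:~R| < dl.
    apply: (@key_real K (M%:R * (k%:R * w j)) (M%:R * (k'%:R * w j)) _ _
        (g j)%:R (g' j)%:R L%:R M%:R dl (a k j) (a k' j)) => //.
    - by have := floor_itv (M%:R * (k%:R * w j)); rewrite intrD.
    - by have := floor_itv (M%:R * (k'%:R * w j)); rewrite intrD.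
    - have := ltn_ord (g j) => gL; rewrite ler0n /= lerBrDr natr1 ler_nat //.
    - have := ltn_ord (g' j) => gL; rewrite ler0n /= lerBrDr natr1 ler_nat //.
    - ring.
    - have hc' : ((x - y)%:~R : K) = (c * M%:Z)%:~R by rewrite hc.
      move: hc'; rewrite intrB intrM /x /y !intrD !natz_R => ->; done.
  move=> h; have := le_trans hj' h; by rewrite leNgt key.
have := leq_card f inj.
by rewrite card_prod !card_ffun !card_ord.
Qed.
End Cnt.

Section U.
Variable K : realType.

Lemma upper (n T' : nat) (dl : K) : (1 <= n)%N -> (1 <= T')%N -> 0 < dl ->
  (forall m, (T' * (Num.truncn (m.+1%:R * dl)) ^ n <= m.+1 ^ n)%N) ->
  dl <= (powR (T'%:R : K) (n%:R^-1))^-1.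
Proof.
move=> n1 T1 d0 H.
set s := powR (T'%:R : K) (n%:R^-1).
have T0 : (0 : K) < T'%:R by rewrite ltr0n.
have s0 : 0 < s by apply: powR_gt0.
have sn : s ^+ n = T'%:R.
  rewrite -powR_mulrn ?(ltW s0) // /s -powRrM mulVf ?powRr1 ?(ltW T0) //.
  by rewrite pnatr_eq0 -lt0n.
rewrite -[s^-1]mul1r ler_pdivlMr //; rewrite leNgt; apply/negP => hs.
set e := dl * s - 1.
have e0 : 0 < e by rewrite /e subr_gt0.
set m := Num.truncn (s / e).
have hm : s / e < m.+1%:R by apply: truncnS_gt.
move: hm; set M := m.+1 => hm.
have hMe : s < M%:R * e by rewrite -ltr_pdivrMr.
have := H m; rewrite -/M; set L := Num.truncn (M%:R * dl) => HL.
have M0 : (0 : K) < M%:R by rewrite ltr0n.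
have /andP[_ hL] := truncn_itv (mulr_ge0 (ltW M0) (ltW d0)).
rewrite -/L in hL.
have key : M%:R < L%:R * s.
  have h1 : (M%:R * dl - 1) * s < L%:R * s.
    by rewrite ltr_pM2r // ltrBlDr natr1.
  apply: le_lt_trans h1.
  have : M%:R * dl * s - s = M%:R + M%:R * e - s by rewrite /e; ring.
  rewrite mulrBl mul1r -mulrA => ->; lra.
have : (M%:R : K) ^+ n < (L%:R * s) ^+ n by rewrite ltrXn2r ?ler0n // -lt0n.
rewrite exprMn sn -!natrX -natrM ltr_nat mulnC ltnNge HL //.
Qed.
End U.

Lemma distZ_le1 (K : realType) (x : K) : distZ x <= 1.
Proof.
have /andP[h1 h2] := floor_itv x.
apply: le_trans (distZ_le x (Num.floor x)) _.
rewrite ger0_norm; last lra.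
rewrite intrD in h2; lra.
Qed.

Theorem mainTheorem2 (R : realType) (n : nat) (w : 'I_n -> R) (i Ti Ti1 : nat) :
  isPeriod w i Ti -> isPeriod w i.+1 Ti1 ->
  (Ti + Ti1)%:R^-1 <= normZ (scalev Ti w) /\
  normZ (scalev Ti w) <= (powR (Ti1%:R : R) (n%:R^-1))^-1.
Proof.
move=> h h'.
have [hlt hmin TT'] := period_S h h'.
have T1 := period_ge1 h.
split; first exact: lower.
case: n w h h' hlt hmin => [|n] w h h' hlt hmin.
  by move: hlt; rewrite /normZ !big_ord0 ltxx.
have [d0|d0] := leP (normZ (scalev Ti w)) 0.
  apply: le_trans d0 _; rewrite invr_ge0 ltW // powR_gt0 // ltr0n.
  exact: leq_trans T1 TT'.
apply: upper => //; first exact: leq_trans T1 TT'.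
move=> m; apply: counting => //.
  by apply: normZ_le => // j; apply: distZ_le1.
move=> d d1 dT; exact: normZ_ex d0 (hmin d d1 dT).
Qed.
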